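(* Let $S$ be a ground set, $f$ a function from subsets of $S$ to subsets of $S$, $t\ge 1$ an integer and $u=\lfloor(\frac{t}{2}+1)^2\rfloor$. A set $\mathcal{C}\subseteq S$ is a $t$-parent-identifying scheme under the $f$-channel if and only if every subset $\mathcal{C}'\subseteq\mathcal{C}$ with $|\mathcal{C}'|\le u$ is a $t$-parent-identifying scheme under the $f$-channel.
   Context: Here $S$ is $Q^n$ or $2^Q$ for a finite set $Q$. A set $\mathcal{D}\subseteq S$ is a $t$-parent-identifying scheme under the $f$-channel if for every $\mathcal{D}'\subseteq\mathcal{D}$ with $|\mathcal{D}'|\le t$ and every $d\in f(\mathcal{D}')$, we have $\bigcap_{\mathcal{P}\subseteq\mathcal{D}:\,|\mathcal{P}|\le t,\ d\in f(\mathcal{P})}\mathcal{P}\neq\emptyset$. *)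

(* Defs.v *)
From mathcomp Require Import all_boot.
Set Implicit Arguments. Unset Strict Implicit. Unset Printing Implicit Defensive.

Definition t_pi_scheme (S : finType) (f : {set S} -> {set S}) (t : nat)
    (D : {set S}) : Prop :=
  forall D' : {set S}, D' \subset D -> #|D'| <= t ->
  forall d : S, d \in f D' ->
  exists x : S, forall P : {set S},
    P \subset D -> #|P| <= t -> d \in f P -> x \in P.

(* Main.v *)
Require Import Defs.
From mathcomp Require Import all_boot.
From mathcomp Require Import zify.

Lemma card_union_seq (S : finType) (I : eqType) (A : {set S}) (B : I -> {set S})
  (m : nat) (r : seq I) :
  (forall x, x \in r -> #|B x :\: A| <= m) ->
  #|A :|: \bigcup_(i <- r) B i| <= #|A| + size r * m.
Proof.
elim: r => [|x r IH] H.
  by rewrite big_nil setU0 leq_addr.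
rewrite big_cons /=.
have H1 : #|B x :\: A| <= m by apply: H; rewrite inE eqxx.
have H2 := IH (fun y hy => H y (mem_behead (s:=x::r) hy)).
have Hsub : A :|: (B x :|: \bigcup_(j <- r) B j) \subset
            (A :|: \bigcup_(j <- r) B j) :|: (B x :\: A).
  apply/subsetP => y; rewrite !inE.
  by case: (y \in A) => //=; case: (y \in B x) => //=; rewrite ?orbF ?orbT.
have := subset_leq_card Hsub.
have := cardsUI (A :|: \bigcup_(j <- r) B j) (B x :\: A).
lia.
Qed.

Lemma arith3 (k m U : nat) : U <= k + 2 + 2*m + k * m -> U * 4 <= (k + m + 3) ^ 2.
Proof.
move=> h; rewrite expnS expn1.
apply: (leq_trans (leq_mul h (leqnn 4))).
have [hk|hk] := leqP (k+1) m.
  have [p ->] : exists p, m = k + 1 + p by exists (m - (k+1)); lia.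
  nia.
have [p Ep] : exists p, k = m + p by exists (k - m); lia.
subst k; nia.
Qed.
Lemma arith2 (a b k t U : nat) : k <= t -> a <= t -> b <= t -> k <= a ->
  U <= a + b - k + k * (t - k - 1) -> U <= (t + 2) ^ 2 %/ 4.
Proof.
move=> h1 h2 h3 h4 h5; rewrite leq_divRL //.
have [hk|hk] := leqP t k.
  have E : t - k - 1 = 0 by lia.
  rewrite E in h5. nia.
have [m Em] : exists m, t = k + 1 + m by exists (t - k - 1); lia.
subst t.
have E : k + 1 + m - k - 1 = m by lia.
rewrite E in h5.
have : U <= k + 2 + 2*m + k * m by lia.
move/arith3. by have -> : k + 1 + m + 2 = k + m + 3 by lia.
Qed.

Lemma arith1 a b c e n m t k : k <= a -> k <= b -> c < k -> e + n = m ->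
  e + c = a + b -> m <= t -> n <= t - k - 1.
Proof. lia. Qed.

Theorem corollary1 (S : finType) (f : {set S} -> {set S}) (t : nat)
    (C : {set S}) :
  1 <= t ->
  (t_pi_scheme f t C <->
   forall C' : {set S}, C' \subset C -> #|C'| <= (t + 2) ^ 2 %/ 4 ->
     t_pi_scheme f t C').
Proof.
move=> t1; split.
  move=> H C' sC' _ D' sD' cD' d hd.
  have [x Hx] := H D' (subset_trans sD' sC') cD' d hd.
  exists x => P sP cP dP; apply: Hx => //; exact: subset_trans sP sC'.
move=> H D' sD' cD' d hd.
set F := [set P : {set S} | [&& P \subset C, #|P| <= t & d \in f P]].
have D'F : D' \in F by rewrite inE sD' cD' hd.
case: (boolP [exists x, [forall P in F, x \in P]]).
  move/existsP=> [x /forallP Hx]; exists x => P sP cP dP.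
  by have := Hx P; rewrite inE sP cP dP /= => ->.
move=> Hno.
have Hex : forall x, exists2 P, P \in F & x \notin P.
  move=> x; apply/exists_inP; apply: contraR Hno => Hn.
  apply/existsP; exists x; apply/forall_inP => P PF.
  by apply: contraR Hn => xP; apply/exists_inP; exists P.
have DD : (D', D') \in setX F F by rewrite inE /= D'F.
case: (arg_minnP (fun p : {set S} * {set S} => #|p.1 :&: p.2|) DD) => [[P1 P2]].
move=> HP Hmin; have : (P1, P2) \in setX F F := HP.
rewrite inE /= => /andP [P1F P2F].
set I := P1 :&: P2.
set k := #|I|.
pose g x := odflt P1 [pick P in F | x \notin P].
have gF : forall x, g x \in F /\ x \notin g x.
  move=> x; rewrite /g; case: pickP => [P /andP [PF xP] | Hn] /=; first by [].
  have [P PF xP] := Hex x; have := Hn P; by rewrite PF xP.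
have Fprop : forall P, P \in F -> [/\ P \subset C, #|P| <= t & d \in f P].
  by move=> P; rewrite inE => /and3P.
set C' := (P1 :|: P2) :|: \bigcup_(x <- enum I) g x.
have [s1 c1 d1] := Fprop _ P1F.
have [s2 c2 d2] := Fprop _ P2F.
have sC' : C' \subset C.
  rewrite !subUset s1 s2 /= bigcup_seq; apply/bigcupsP => x _.
  by have [/Fprop [] ] := gF x.
have Hk : k <= t by apply: leq_trans (subset_leq_card (subsetIl _ _)) c1.
have cC' : #|C'| <= (t + 2) ^ 2 %/ 4.
  have Hb : forall x, x \in enum I -> #|g x :\: (P1 :|: P2)| <= t - k - 1.
    move=> x; rewrite mem_enum => xI.
    have [gxF xg] := gF x.
    have [_ cg _] := Fprop _ gxF.
    have X1 : (P1, g x) \in setX F F by rewrite inE /= P1F gxF.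
    have X2 : (P2, g x) \in setX F F by rewrite inE /= P2F gxF.
    have m1' := Hmin _ X1; have m2' := Hmin _ X2.
    rewrite -/I -/k in m1' m2'.
    have Hp : g x :&: I \proper I.
      rewrite properE subsetIr /=; apply/subsetPn; exists x => //.
      by rewrite inE (negbTE xg).
    have cp := proper_card Hp.
    have E1 := cardsID (P1 :|: P2) (g x).
    have E2 := cardsUI (g x :&: P1) (g x :&: P2).
    have e3 : (g x :&: P1) :|: (g x :&: P2) = g x :&: (P1 :|: P2) by rewrite setIUr.
    have e4 : (g x :&: P1) :&: (g x :&: P2) = g x :&: I.
      by rewrite /I setIACA setIid.
    rewrite e3 e4 in E2.
    rewrite /= [P1 :&: _]setIC in m1'; rewrite /= [P2 :&: _]setIC in m2'.
    rewrite -/k in cp.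
    exact: (@arith1 _ _ _ _ _ _ _ _ m1' m2' cp E1 E2 cg).
  have HU := @card_union_seq S S (P1 :|: P2) g (t-k-1) (enum I) Hb.
  rewrite -cardE (cardsU P1 P2) -/I -/k in HU.
  exact: (@arith2 #|P1| #|P2| k t #|C'| Hk c1 c2 (subset_leq_card (subsetIl _ _)) HU).
exfalso.
have sP1 : P1 \subset C' by apply/subsetP => y hy; rewrite /C' !inE hy.
have sP2 : P2 \subset C' by apply/subsetP => y hy; rewrite /C' !inE hy orbT.
have [x Hx] := H C' sC' cC' P1 sP1 c1 d d1.
have xP1 := Hx P1 sP1 c1 d1.
have xP2 := Hx P2 sP2 c2 d2.
have xI : x \in I by rewrite inE xP1 xP2.
have [gxF xg] := gF x.
have [_ cg dg] := Fprop _ gxF.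
have sg : g x \subset C'.
  apply: subset_trans (subsetUr (P1 :|: P2) _).
  rewrite bigcup_seq; apply: (bigcup_sup x); by rewrite mem_enum.
by move: (Hx _ sg cg dg); rewrite (negbTE xg).
Qed.
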